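(* Let $U$ be an $r$-dimensional subspace of $\mathbb{R}^d$, $0\ne v\in U^\perp$, $\delta\in(0,1)$, and let $\Omega$ be a list of $m$ indices sampled independently and uniformly with replacement from $[d]$, where $m\ge 4\mu(v)\log(1/\delta)$. Let $\beta=(1+2\log(1/\delta))^2$. Then with probability at least $1-\delta$, $$\|U_\Omega^Tv_\Omega\|_2^2\le\beta\,\frac md\,\frac{r\mu(U)}{d}\,\|v\|_2^2.$$
   Context: For an $r$-dimensional subspace $U\subseteq\mathbb{R}^d$, $\mu(U)=\frac{d}{r}\max_{i\in[d]}\|\mathcal{P}_Ue_i\|_2^2$; for a nonzero $v\in\mathbb{R}^d$, $\mu(v)=d\|v\|_\infty^2/\|v\|_2^2$. For a list $\Omega\in[d]^m$, $v_\Omega\in\mathbb{R}^m$ has $j$th entry $v(\Omega(j))$. Taking $U$ also to denote a $d\times r$ matrix with orthonormal columns spanning $U$, $U_\Omega$ is the $m\times r$ matrix whose $j$th row is row $\Omega(j)$ of $U$. *)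

(* Defs.v *)
(* real numbers (need ln), vectors in R^d as functions nat -> R
   restricted to indices < d, and a d x r matrix as nat -> nat -> R. *)
From Stdlib Require Import Reals List.
Import ListNotations.
Open Scope R_scope.

Fixpoint sumR (n : nat) (f : nat -> R) : R :=
  match n with O => 0 | S k => sumR k f + f k end.

(* maxR n f = max of f 0, ..., f (n-1) (0 if n = 0; used on nonnegative values) *)
Fixpoint maxR (n : nat) (f : nat -> R) : R :=
  match n with O => 0 | S k => Rmax (maxR k f) (f k) end.

Definition norm2sq (d : nat) (v : nat -> R) : R := sumR d (fun i => v i ^ 2).

Definition orthonormal_cols (d r : nat) (U : nat -> nat -> R) : Prop :=
  forall k l, (k < r)%nat -> (l < r)%nat ->
    sumR d (fun i => U i k * U i l) = if Nat.eqb k l then 1 else 0.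

Definition in_perp (d r : nat) (U : nat -> nat -> R) (v : nat -> R) : Prop :=
  forall k, (k < r)%nat -> sumR d (fun i => U i k * v i) = 0.

(* projection P_U = U U^T applied to e_i : coordinate j *)
Definition proj_e (r : nat) (U : nat -> nat -> R) (i j : nat) : R :=
  sumR r (fun k => U j k * U i k).

Definition muU (d r : nat) (U : nat -> nat -> R) : R :=
  INR d / INR r * maxR d (fun i => norm2sq d (proj_e r U i)).

Definition muv (d : nat) (v : nat -> R) : R :=
  INR d * (maxR d (fun i => Rabs (v i))) ^ 2 / norm2sq d v.

(* all lists of length m with entries in {0,...,d-1} (i.e. [d]^m, 0-based) *)
Fixpoint all_lists (d m : nat) : list (list nat) :=
  match m with
  | O => [ [] ]
  | S k => flat_map (fun i => map (cons i) (all_lists d k)) (seq 0 d)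
  end.

Definition sampled_sq (r : nat) (U : nat -> nat -> R) (v : nat -> R) (Om : list nat) : R :=
  sumR r (fun k => (sumR (length Om) (fun j => U (nth j Om 0%nat) k * v (nth j Om 0%nat))) ^ 2).

(* probability, under uniform i.i.d. sampling with replacement of m indices
   from [d], that the event  f Om <= c  holds *)
Definition prob_le (d m : nat) (f : list nat -> R) (c : R) : R :=
  INR (length (filter (fun Om => if Rle_dec (f Om) c then true else false)
                      (all_lists d m)))
  / (INR d ^ m).

(* Main.v *)
Require Import Defs.
From Stdlib Require Import Reals List.
From Stdlib Require Import Lra Psatz.
Import ListNotations.
Open Scope R_scope.

Lemma sumR_ext n f g : (forall i, (i < n)%nat -> f i = g i) -> sumR n f = sumR n g.
Proof. induction n; simpl; intros H; auto. rewrite IHn by (intros; apply H; lia). rewrite H by lia; auto. Qed.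

Lemma sumR_le n f g : (forall i, (i < n)%nat -> f i <= g i) -> sumR n f <= sumR n g.
Proof. induction n; simpl; intros H; [lra|]. assert (f n <= g n) by (apply H; lia).
 assert (sumR n f <= sumR n g) by (apply IHn; intros; apply H; lia). lra. Qed.

Lemma sumR_plus n f g : sumR n (fun i => f i + g i) = sumR n f + sumR n g.
Proof. induction n; simpl; [lra|]. rewrite IHn; lra. Qed.

Lemma sumR_scal n c f : sumR n (fun i => c * f i) = c * sumR n f.
Proof. induction n; simpl; [lra|]. rewrite IHn; lra. Qed.

Lemma sumR_const n c : sumR n (fun _ => c) = INR n * c.
Proof. induction n; simpl sumR; [simpl; lra|]. rewrite IHn, S_INR; lra. Qed.

Lemma sumR_swap n m f : sumR n (fun i => sumR m (fun j => f i j)) = sumR m (fun j => sumR n (fun i => f i j)).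
Proof. induction n; simpl.
 - induction m; simpl; lra.
 - rewrite IHn. rewrite <- sumR_plus. reflexivity. Qed.

Lemma sumR_nonneg n f : (forall i, (i < n)%nat -> 0 <= f i) -> 0 <= sumR n f.
Proof. intros H. apply Rle_trans with (sumR n (fun _ => 0)).
 rewrite sumR_const; lra. apply sumR_le; auto. Qed.

Lemma sumR_ge_term n f k : (forall i, (i < n)%nat -> 0 <= f i) -> (k < n)%nat -> f k <= sumR n f.
Proof. induction n; intros H Hk; [lia|]. simpl.
 destruct (Nat.eq_dec k n).
 - subst. assert (0 <= sumR n f) by (apply sumR_nonneg; intros; apply H; lia). lra.
 - assert (f k <= sumR n f) by (apply IHn; [intros; apply H; lia|lia]).
   assert (0 <= f n) by (apply H; lia). lra. Qed.

Lemma sumR_shift n f : sumR (S n) f = f 0%nat + sumR n (fun j => f (S j)).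
Proof. induction n; simpl; [lra|]. simpl in IHn. rewrite IHn. lra. Qed.

Lemma sumR_kron r a k : (k < r)%nat ->
  sumR r (fun l => a l * (if Nat.eqb k l then 1 else 0)) = a k.
Proof. induction r; intros Hk; [lia|]. simpl.
 destruct (Nat.eq_dec k r).
 - subst. rewrite Nat.eqb_refl.
   rewrite (sumR_ext r _ (fun _ => 0)). rewrite sumR_const. lra.
   intros i Hi. destruct (Nat.eqb_spec r i); [lia|]. lra.
 - rewrite IHr by lia. destruct (Nat.eqb_spec k r); [lia|]. lra. Qed.

Lemma sumR_mul n f g : sumR n f * sumR n g = sumR n (fun k => sumR n (fun l => f k * g l)).
Proof. rewrite Rmult_comm. rewrite <- sumR_scal.
 apply sumR_ext. intros. rewrite Rmult_comm, <- sumR_scal. apply sumR_ext; intros; lra. Qed.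

Lemma sumR_sq n f : (sumR n f)^2 = sumR n (fun k => sumR n (fun l => f k * f l)).
Proof. rewrite <- sumR_mul. ring. Qed.

Lemma maxR_ge n f i : (i < n)%nat -> f i <= maxR n f.
Proof. induction n; intros Hi; [lia|]. simpl. destruct (Nat.eq_dec i n).
 - subst. apply Rmax_r.
 - eapply Rle_trans; [apply IHn; lia| apply Rmax_l]. Qed.


Fixpoint lsum {A} (l : list A) (g : A -> R) : R :=
  match l with [] => 0 | x :: t => g x + lsum t g end.

Lemma lsum_app {A} (l1 l2 : list A) g : lsum (l1 ++ l2) g = lsum l1 g + lsum l2 g.
Proof. induction l1; simpl; [lra|]. rewrite IHl1; lra. Qed.

Lemma lsum_map {A B} (h : A -> B) l g : lsum (map h l) g = lsum l (fun x => g (h x)).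
Proof. induction l; simpl; auto. rewrite IHl; auto. Qed.

Lemma lsum_flat {A} (F : nat -> list A) n g :
  lsum (flat_map F (seq 0 n)) g = sumR n (fun i => lsum (F i) g).
Proof. induction n; [simpl; auto|]. rewrite seq_S, flat_map_app, lsum_app, IHn. simpl.
 rewrite app_nil_r. reflexivity. Qed.

Lemma lsum_all d m g : lsum (all_lists d (S m)) g =
  sumR d (fun i => lsum (all_lists d m) (fun Om => g (i :: Om))).
Proof. simpl. rewrite lsum_flat. apply sumR_ext. intros. apply lsum_map. Qed.

Lemma lsum_le {A} (l : list A) f g : (forall x, f x <= g x) -> lsum l f <= lsum l g.
Proof. induction l; simpl; intros H; [lra|]. specialize (IHl H). specialize (H a). lra. Qed.

Lemma lsum_one {A} (l : list A) : lsum l (fun _ => 1) = INR (length l).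
Proof. induction l; simpl lsum; simpl length; [simpl; lra|]. rewrite IHl, S_INR. lra. Qed.

Lemma len_all d m : INR (length (all_lists d m)) = INR d ^ m.
Proof. rewrite <- lsum_one. induction m.
 - simpl. lra.
 - rewrite lsum_all. rewrite (sumR_ext _ _ (fun _ => INR d ^ m)) by (intros; apply IHm).
   rewrite sumR_const. simpl. lra. Qed.

Lemma markov {A} (l : list A) (f Phi : A -> R) (c a : R) :
  (forall x, 0 <= Phi x) -> (forall x, c < f x -> a <= Phi x) ->
  a * (INR (length l) - INR (length (filter (fun x => if Rle_dec (f x) c then true else false) l)))
  <= lsum l Phi.
Proof. intros H0 H1. induction l; [simpl; lra|]. cbn [filter length lsum].
 destruct (Rle_dec (f a0) c).
 - cbn [length]. rewrite !S_INR. specialize (H0 a0). nra.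
 - rewrite S_INR. assert (a <= Phi a0) by (apply H1; lra). nra. Qed.

Definition vadd (w x : nat -> R) : nat -> R := fun k => w k + x k.

Fixpoint Sacc (X : nat -> nat -> R) (w : nat -> R) (Om : list nat) : nat -> R :=
  match Om with [] => w | i :: t => Sacc X (vadd w (X i)) t end.

Lemma Sacc_val X w Om k : Sacc X w Om k = w k + sumR (length Om) (fun j => X (nth j Om 0%nat) k).
Proof. revert w. induction Om; intros w; [simpl; lra|]. cbn [Sacc]. rewrite IHOm.
 change (length (a::Om)) with (S (length Om)). rewrite sumR_shift. cbn [nth].
 unfold vadd. lra. Qed.

Lemma walk_mult d X (Phi : (nat -> R) -> R) K :
  0 <= K -> (forall w, sumR d (fun i => Phi (vadd w (X i))) <= INR d * K * Phi w) ->
  forall m w, lsum (all_lists d m) (fun Om => Phi (Sacc X w Om)) <= (INR d * K) ^ m * Phi w.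
Proof. intros HK H m. assert (0 <= INR d) by apply pos_INR.
 induction m; intros w.
 - simpl. lra.
 - rewrite lsum_all. simpl Sacc.
   apply Rle_trans with (sumR d (fun i => (INR d * K)^m * Phi (vadd w (X i)))).
   + apply sumR_le. intros. apply IHm.
   + rewrite sumR_scal. specialize (H w). assert (0 <= (INR d * K)^m) by (apply pow_le; nra).
     simpl. nra. Qed.

Lemma walk_add d X (Phi : (nat -> R) -> R) c :
  (forall w, sumR d (fun i => Phi (vadd w (X i))) <= INR d * (Phi w + c)) ->
  forall m w, lsum (all_lists d m) (fun Om => Phi (Sacc X w Om)) <= INR d ^ m * (Phi w + INR m * c).
Proof. intros H m. assert (0 <= INR d) by apply pos_INR.
 induction m; intros w.
 - simpl. lra.
 - rewrite lsum_all. simpl Sacc.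
   apply Rle_trans with (sumR d (fun i => INR d ^ m * (Phi (vadd w (X i)) + INR m * c))).
   + apply sumR_le. intros. apply IHm.
   + rewrite sumR_scal, sumR_plus, sumR_const. specialize (H w). assert (0 <= INR d ^m) by (apply pow_le; nra).
     rewrite S_INR. simpl. nra. Qed.


Definition nrm2 r (w : nat -> R) := sumR r (fun k => w k ^ 2).
Definition ip r (w x : nat -> R) := sumR r (fun k => w k * x k).

Lemma nrm2_nonneg r w : 0 <= nrm2 r w.
Proof. apply sumR_nonneg. intros. apply pow2_ge_0. Qed.

Lemma sumR_lin3 n a b c f g h :
  sumR n (fun k => a * f k + b * g k + c * h k) = a * sumR n f + b * sumR n g + c * sumR n h.
Proof. rewrite !sumR_plus, !sumR_scal. reflexivity. Qed.

Lemma nrm2_add r w x : nrm2 r (vadd w x) = nrm2 r w + 2 * ip r w x + nrm2 r x.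
Proof. unfold nrm2, ip, vadd. rewrite <- (Rmult_1_l (sumR r (fun k => w k ^ 2))).
 rewrite <- (Rmult_1_l (sumR r (fun k => x k ^ 2))). rewrite <- sumR_lin3.
 apply sumR_ext. intros; ring. Qed.

Lemma cauchy r w x : (ip r w x)^2 <= nrm2 r w * nrm2 r x.
Proof.
 assert (Hq : forall t, 0 <= t^2 * nrm2 r w - 2 * t * ip r w x + nrm2 r x).
 { intros t. assert (E : t^2 * nrm2 r w - 2 * t * ip r w x + nrm2 r x
        = sumR r (fun k => (t * w k - x k)^2)).
   { unfold nrm2, ip. rewrite <- (Rmult_1_l (sumR r (fun k => x k ^ 2))).
     replace (- 2 * t * sumR r (fun k => w k * x k)) with ((- 2 * t) * sumR r (fun k => w k * x k)) by ring.
     unfold Rminus. replace (- (2 * t * sumR r (fun k => w k * x k))) with ((- (2 * t)) * sumR r (fun k => w k * x k)) by ring.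
     rewrite <- sumR_lin3. apply sumR_ext. intros; ring. }
   rewrite E. apply sumR_nonneg. intros. apply pow2_ge_0. }
 assert (HA := nrm2_nonneg r w). assert (HC := nrm2_nonneg r x).
 destruct (Req_dec (nrm2 r w) 0) as [H0|H0].
 -
   assert (Hw : forall k, (k < r)%nat -> w k = 0).
   { intros k Hk. assert (w k ^ 2 <= nrm2 r w).
     { unfold nrm2. apply (sumR_ge_term r (fun k => w k ^ 2)); auto. intros; apply pow2_ge_0. }
     nra. }
   assert (ip r w x = 0).
   { unfold ip. rewrite (sumR_ext _ _ (fun _ => 0)). rewrite sumR_const; lra.
     intros i Hi. rewrite Hw; auto; lra. }
   rewrite H, H0. lra.
 - specialize (Hq (ip r w x / nrm2 r w)).
   assert (0 < nrm2 r w) by lra.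
   assert (E2 : (ip r w x / nrm2 r w) ^ 2 * nrm2 r w - 2 * (ip r w x / nrm2 r w) * ip r w x + nrm2 r x
      = (nrm2 r w * nrm2 r x - ip r w x ^2) / nrm2 r w) by (field; lra).
   rewrite E2 in Hq.
   assert (0 <= nrm2 r w * nrm2 r x - ip r w x ^ 2).
   { apply Rmult_le_reg_r with (/ nrm2 r w). apply Rinv_0_lt_compat; lra.
     rewrite Rmult_0_l. exact Hq. }
   lra. Qed.

Lemma exp_le x y : x <= y -> exp x <= exp y.
Proof. intros H. destruct (Rle_lt_or_eq_dec _ _ H). left; apply exp_increasing; auto. subst; lra. Qed.

Lemma exp_pow x m : exp x ^ m = exp (INR m * x).
Proof. induction m. simpl. rewrite Rmult_0_l, exp_0. auto.
 rewrite S_INR. simpl. rewrite IHm. rewrite <- exp_plus. f_equal; ring. Qed.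

Lemma exp_4 x : exp x = exp (x/4) ^ 4.
Proof. simpl. rewrite Rmult_1_r, <- !exp_plus. f_equal. field. Qed.

Lemma exp_inv_bound x : x < 1 -> exp x * (1 - x) <= 1.
Proof. intros H. assert (H1 := exp_ineq1_le (-x)).
 assert (exp x * exp (-x) = 1) by (rewrite <- exp_plus; replace (x + - x) with 0 by ring; apply exp_0).
 assert (0 < exp x) by apply exp_pos. nra. Qed.

Lemma exp_quad z : -0.6 <= z <= 0.6 -> exp z <= 1 + z + z^2.
Proof. intros Hz. rewrite exp_4. set (u := exp (z/4)).
 assert (Hu : 0 < u) by apply exp_pos.
 assert (H1 : u * (1 - z/4) <= 1) by (apply exp_inv_bound; lra).
 assert (HP : 1 <= (1+z+z*z)*((1-z/4)^4)) by nra.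
 assert (H2 : 0 < 1 - z/4) by lra.
 assert (H3 : (u * (1 - z/4))^4 <= 1).
 { assert (0 <= u * (1-z/4)) by nra. replace 1 with (1^4) by ring. apply pow_incr. lra. }
 assert (H4 : u^4 * (1-z/4)^4 <= (1+z+z^2) * (1-z/4)^4).
 { rewrite <- Rpow_mult_distr. replace (z^2) with (z*z) by ring. lra. }
 apply Rmult_le_reg_r with ((1-z/4)^4). apply pow_lt; lra. lra. Qed.

Lemma exp_half L : 0 <= L <= 9/4 -> exp L <= (1 + 2*L)^2.
Proof. intros HL. assert (E : exp L = exp (L/2) ^ 2).
 { simpl. rewrite Rmult_1_r, <- exp_plus. f_equal; field. }
 rewrite E. assert (0 < exp (L/2)) by apply exp_pos.
 assert (exp (L/2) <= 1 + 2*L).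
 { rewrite exp_4.
   assert (H1 : exp (L/2/4) * (1 - L/8) <= 1).
   { replace (L/8) with (L/2/4) by field. apply exp_inv_bound. lra. }
   set (u := exp (L/2/4)) in *.
   assert (Hu : 0 < u) by apply exp_pos.
   set (y := L/8) in *.
   assert (HP : 1 <= (1+16*y)*((1-y)^4)) by (unfold y; nra).
   assert (H3 : (u * (1 - y))^4 <= 1).
   { assert (0 <= u * (1-y)) by (unfold y in *; nra). replace 1 with (1^4) by ring. apply pow_incr. lra. }
   rewrite Rpow_mult_distr in H3.
   apply Rmult_le_reg_r with ((1-y)^4). apply pow_lt; unfold y; lra.
   replace (1 + 2*L) with (1 + 16 * y) by (unfold y; field). lra. }
 apply pow_incr. lra. Qed.


Definition Xs (U : nat -> nat -> R) (v : nat -> R) (i : nat) : nat -> R := fun k => U i k * v i.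

Lemma nrm2_X r U v i : nrm2 r (Xs U v i) = v i ^ 2 * sumR r (fun k => U i k ^ 2).
Proof. unfold nrm2, Xs. rewrite <- sumR_scal. apply sumR_ext; intros; ring. Qed.

Lemma proj_row d r U i : orthonormal_cols d r U ->
  norm2sq d (proj_e r U i) = sumR r (fun k => U i k ^ 2).
Proof. intros HO. unfold norm2sq, proj_e.
 rewrite (sumR_ext d _ (fun j => sumR r (fun k => sumR r (fun l => U i k * U i l * (U j k * U j l))))).
 2:{ intros j Hj. rewrite sumR_sq. apply sumR_ext; intros; apply sumR_ext; intros; ring. }
 rewrite sumR_swap. apply sumR_ext. intros k Hk.
 rewrite sumR_swap. rewrite (sumR_ext r _ (fun l => U i k * U i l * (if Nat.eqb k l then 1 else 0))).
   rewrite (sumR_kron r (fun l => U i k * U i l)) by auto. ring.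
 - intros l Hl. rewrite sumR_scal. rewrite HO; auto. Qed.

Lemma meanzero d r U v w : in_perp d r U v -> sumR d (fun i => ip r w (Xs U v i)) = 0.
Proof. intros HP. unfold ip, Xs. rewrite sumR_swap.
 rewrite (sumR_ext r _ (fun _ => 0)). rewrite sumR_const; lra.
 intros k Hk.
 rewrite sumR_scal, HP; auto. ring. Qed.

Lemma sampled_eq r U v Om : sampled_sq r U v Om = nrm2 r (Sacc (Xs U v) (fun _ => 0) Om).
Proof. unfold sampled_sq, nrm2. apply sumR_ext. intros k Hk. rewrite Sacc_val. unfold Xs.
 rewrite Rplus_0_l. reflexivity. Qed.


Lemma div_nonneg a b : 0 <= a -> 0 < b -> 0 <= a / b.
Proof. intros. apply Rmult_le_pos; auto. left; apply Rinv_0_lt_compat; auto. Qed.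

Lemma sqrt_taylor h y : 0 < h -> 0 <= h*h + y -> sqrt (h*h + y) <= h + y/(2*h).
Proof. intros Hh Hy.
 assert (E : (h + y/(2*h)) * (h + y/(2*h)) = h*h + y + (y/(2*h))*(y/(2*h))) by (field; lra).
 assert (0 <= h + y/(2*h)).
 { replace (h + y/(2*h)) with ((h*h + y + h*h)/(2*h)) by (field; lra).
   apply Rmult_le_pos; [nra| left; apply Rinv_0_lt_compat; lra]. }
 rewrite <- (sqrt_square (h + y/(2*h))) by auto.
 apply sqrt_le_1_alt. rewrite E. assert (0 <= (y/(2*h))*(y/(2*h))) by nra. lra. Qed.

Lemma step_real T s q h ipv n nw :
  0 < q -> q*q = T -> 3/2 <= s -> h*h = T + nw -> 0 <= nw -> q <= h ->
  ipv^2 <= nw * n -> 0 <= n -> n <= T/(4*s^2) -> 0 <= T + nw + 2*ipv + n ->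
  exp (s/q * sqrt (T + nw + 2*ipv + n)) <=
  exp (s/q * h) * (1 + s/q * ipv / h + (s/(2*T) + ((s+1/4)/q)^2) * n).
Proof. intros Hq HT Hs Hh Hnw Hqh Hc Hn0 Hn Hpos.
 assert (Hh0 : 0 < h) by lra.
 assert (Hsn : sqrt (T + nw + 2*ipv + n) <= h + (2*ipv + n)/(2*h)).
 { replace (T + nw + 2*ipv + n) with (h*h + (2*ipv+n)) by lra. apply sqrt_taylor; lra. }
 set (lam := s/q).
 assert (Hlam : 0 < lam) by (unfold lam; apply Rdiv_lt_0_compat; lra).
 set (Y := ipv / h).
 set (c := s/(2*T)).
 set (z := lam * Y + c * n).
 assert (Hz1 : lam * sqrt (T + nw + 2*ipv + n) <= lam * h + z).
 { apply Rle_trans with (lam * (h + (2*ipv + n)/(2*h))).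
   apply Rmult_le_compat_l; lra.
   unfold z, Y, c, lam.
   replace (s / q * (h + (2 * ipv + n) / (2 * h))) with (s/q*h + s/q*(ipv/h) + s/q * (n/(2*h))) by (field; lra).
   assert (s / q * (n / (2 * h)) <= s / (2*T) * n).
   { rewrite <- HT. replace (s / q * (n / (2 * h))) with (s * n / (2 * q * h)) by (field; lra).
     replace (s / (2 * (q*q)) * n) with (s * n / (2*q*q)) by (field; lra).
     unfold Rdiv. apply Rmult_le_compat_l. nra. apply Rinv_le_contravar; nra. }
   lra. }
 assert (HY2 : Y^2 <= n).
 { unfold Y. replace ((ipv/h)^2) with (ipv^2 / (h*h)) by (field; lra).
   apply Rmult_le_reg_r with (h*h). nra.
   replace (ipv ^ 2 / (h * h) * (h * h)) with (ipv^2) by (field; lra). nra. }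
 set (rho := sqrt n).
 assert (Hrho0 : 0 <= rho) by apply sqrt_pos.
 assert (Hrho2 : rho * rho = n) by (apply sqrt_sqrt; lra).
 assert (HYr : Rabs Y <= rho).
 { assert (E1 : Rabs Y * Rabs Y = Y^2).
   { rewrite <- Rabs_mult. rewrite Rabs_right. ring. nra. }
   assert (0 <= Rabs Y) by apply Rabs_pos. nra. }
 assert (Hrq : rho <= q / (2*s)).
 { assert (rho * rho <= (q/(2*s))*(q/(2*s))).
   { rewrite Hrho2. replace ((q/(2*s))*(q/(2*s))) with (q*q/(4*s^2)) by (field; lra). rewrite HT. lra. }
   assert (0 <= q/(2*s)) by (apply div_nonneg; lra). nra. }
 set (A := (s + 1/4)/q).
 assert (HA : lam + c * (q/(2*s)) = A).
 { unfold lam, c, A. rewrite <- HT. field. lra. }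
 assert (Hc0 : 0 <= c) by (unfold c; apply div_nonneg; nra).
 assert (Hzabs : Rabs z <= rho * A).
 { unfold z. eapply Rle_trans. apply Rabs_triang.
   rewrite !Rabs_mult, (Rabs_right lam), (Rabs_right c), (Rabs_right n) by lra.
   rewrite <- HA. rewrite <- Hrho2.
   assert (lam*Rabs Y <= lam*rho) by (apply Rmult_le_compat_l; lra).
   assert (c*(rho*rho) <= c*(rho*(q/(2*s)))) by (apply Rmult_le_compat_l; auto; apply Rmult_le_compat_l; auto).
   replace (rho * (lam + c*(q/(2*s)))) with (lam*rho + c*(rho*(q/(2*s)))) by ring. lra. }
 assert (HrA : rho * A <= 0.6).
 { apply Rle_trans with (q/(2*s) * A).
   apply Rmult_le_compat_r; auto. unfold A. apply div_nonneg; lra.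
   unfold A. replace (q / (2 * s) * ((s + 1 / 4) / q)) with (1/2 + 1/(8*s)) by (field; lra).
   assert (1/(8*s) <= 1/12). { apply Rmult_le_reg_r with (8*s). lra. field_simplify; lra. }
   lra. }
 assert (Hzq : exp z <= 1 + z + z^2).
 { apply exp_quad. assert (Hz6 : Rabs z <= 0.6) by lra.
   unfold Rabs in Hz6; destruct (Rcase_abs z); lra. }
 assert (Hz2 : z^2 <= A^2 * n).
 { assert (Rabs z * Rabs z <= (rho*A)*(rho*A)). { apply Rmult_le_compat; auto using Rabs_pos. }
   rewrite <- Rabs_mult in H. rewrite Rabs_right in H by nra. rewrite <- Hrho2. nra. }
 eapply Rle_trans. apply exp_le. exact Hz1. rewrite exp_plus.
 apply Rmult_le_compat_l. left; apply exp_pos.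
 eapply Rle_trans. exact Hzq.
 replace (lam * ipv / h) with (lam * Y) by (unfold Y; field; lra).
 fold c. fold A. assert (Ez : z = lam * Y + c * n) by reflexivity. lra. Qed.


Theorem lemma4 (d r m : nat) (U : nat -> nat -> R) (v : nat -> R) (delta : R) :
  (1 <= r)%nat ->
  orthonormal_cols d r U ->
  in_perp d r U v ->
  (exists i, (i < d)%nat /\ v i <> 0) ->
  0 < delta < 1 ->
  INR m >= 4 * muv d v * ln (1 / delta) ->
  let beta := (1 + 2 * ln (1 / delta)) ^ 2 in
  prob_le d m (sampled_sq r U v)
    (beta * (INR m / INR d) * (INR r * muU d r U / INR d) * norm2sq d v)
  >= 1 - delta.
Proof.
 intros Hr HO HP [i0 [Hi0 Hv0]] Hdel Hm beta.
 set (L := ln (1/delta)) in *.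
 assert (HL : 0 < L).
 { unfold L. rewrite <- ln_1. apply ln_increasing. lra.
   unfold Rdiv. rewrite Rmult_1_l. replace 1 with (/1) at 1 by field. apply Rinv_lt_contravar; lra. }
 assert (Hdexp : delta = exp (- L)).
 { unfold L. unfold Rdiv. rewrite Rmult_1_l. rewrite ln_Rinv by lra. rewrite Ropp_involutive.
   rewrite exp_ln; lra. }
 assert (Hd : 0 < INR d) by (apply lt_0_INR; lia).
 set (nv := norm2sq d v) in *.
 assert (Hnv : v i0 ^ 2 <= nv).
 { unfold nv, norm2sq. apply (sumR_ge_term d (fun i => v i ^ 2)); auto. intros; apply pow2_ge_0. }
 assert (Hv0sq : 0 < v i0 ^ 2) by (simpl; rewrite Rmult_1_r; apply Rsqr_pos_lt; auto).
 assert (Hnvpos : 0 < nv) by lra.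
 set (vinf := maxR d (fun i => Rabs (v i))).
 assert (Hvi : forall i, (i < d)%nat -> v i ^ 2 <= vinf ^ 2).
 { intros i Hi. assert (Rabs (v i) <= vinf) by (apply (maxR_ge d (fun i => Rabs (v i))); auto).
   rewrite <- (pow2_abs (v i)). assert (0 <= Rabs (v i)) by apply Rabs_pos.
   apply pow_incr. lra. }
 assert (Hvinf : 0 < vinf ^ 2) by (specialize (Hvi i0 Hi0); lra).
 set (rn := fun i => sumR r (fun k => U i k ^ 2)).
 set (M := maxR d (fun i => norm2sq d (proj_e r U i))).
 assert (HrnM : forall i, (i < d)%nat -> rn i <= M).
 { intros i Hi. unfold rn. rewrite <- (proj_row d r U i) by auto. unfold M.
   apply (maxR_ge d (fun i => norm2sq d (proj_e r U i))); auto. }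
 assert (Hrn0 : forall i, 0 <= rn i).
 { intros i. unfold rn. apply sumR_nonneg. intros; apply pow2_ge_0. }
 assert (Hsumrn : sumR d rn = INR r).
 { unfold rn. rewrite sumR_swap. rewrite (sumR_ext r _ (fun _ => 1)). rewrite sumR_const; lra.
   intros k Hk. specialize (HO k k Hk Hk). rewrite Nat.eqb_refl in HO. rewrite <- HO.
   apply sumR_ext; intros; ring. }
 assert (Hrpos : 1 <= INR r) by (apply (le_INR 1); auto).
 assert (HMpos : 0 < M).
 { assert (sumR d rn <= sumR d (fun _ => M)) by (apply sumR_le; auto).
   rewrite sumR_const, Hsumrn in H. nra. }
 assert (Hthr : beta * (INR m / INR d) * (INR r * muU d r U / INR d) * nv
                = beta * (INR m / INR d * M * nv)).
 { unfold muU. fold M. field. lra. }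
 rewrite Hthr. clear Hthr.
 assert (Hmuv : 0 < muv d v).
 { unfold muv. fold nv vinf. apply Rmult_lt_0_compat. nra. apply Rinv_0_lt_compat; lra. }
 assert (Hmpos : 0 < INR m) by nra.
 set (T := INR m / INR d * M * nv).
 assert (HT : 0 < T).
 { unfold T. apply Rmult_lt_0_compat; auto. apply Rmult_lt_0_compat; auto.
   apply Rmult_lt_0_compat; auto. apply Rinv_0_lt_compat; lra. }
 set (sig := M * nv / INR d).
 assert (Hsig : INR m * sig = T) by (unfold sig, T; field; lra).
 set (X := Xs U v).
 assert (HsumX : sumR d (fun i => nrm2 r (X i)) <= INR d * sig).
 { unfold X. rewrite (sumR_ext d _ (fun i => v i ^ 2 * rn i)) by (intros; apply nrm2_X).
   apply Rle_trans with (sumR d (fun i => M * v i ^ 2)).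
   - apply sumR_le. intros i Hi. specialize (HrnM i Hi). assert (0 <= v i ^ 2) by apply pow2_ge_0. nra.
   - rewrite sumR_scal. fold (norm2sq d v). fold nv. unfold sig. right; field; lra. }
 assert (Hvbound : vinf ^ 2 <= INR m * nv / (4 * INR d * L)).
 { unfold muv in Hm. fold nv vinf in Hm.
   apply Rmult_le_reg_r with (4 * INR d * L / nv). apply Rmult_lt_0_compat. nra. apply Rinv_0_lt_compat; lra.
   replace (INR m * nv / (4 * INR d * L) * (4 * INR d * L / nv)) with (INR m) by (field; lra).
   replace (vinf ^ 2 * (4 * INR d * L / nv)) with (4 * (INR d * vinf ^ 2 / nv) * L) by (field; lra).
   lra. }
 assert (HbX : forall i, (i < d)%nat -> nrm2 r (X i) <= T / (4 * L)).
 { intros i Hi. unfold X. rewrite nrm2_X. fold (rn i).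
   apply Rle_trans with (vinf ^ 2 * M).
   - specialize (Hvi i Hi). specialize (HrnM i Hi). specialize (Hrn0 i).
     assert (0 <= v i ^ 2) by apply pow2_ge_0. nra.
   - apply Rle_trans with (INR m * nv / (4 * INR d * L) * M). apply Rmult_le_compat_r; lra.
     unfold T. right. field. lra. }
 unfold prob_le.
 set (good := INR (length (filter (fun Om => if Rle_dec (sampled_sq r U v Om) (beta * T) then true else false) (all_lists d m)))).
 set (Dm := INR d ^ m).
 assert (HDm : 0 < Dm) by (apply pow_lt; lra).
 assert (Hlen : INR (length (all_lists d m)) = Dm) by apply len_all.
 cut (Dm - good <= delta * Dm).
 { intros H. apply Rle_ge. apply Rmult_le_reg_r with Dm; auto.
   replace (good / Dm * Dm) with good by (field; lra). lra. }
 assert (Hmk : forall a Phi, 0 < a -> (forall x, 0 <= Phi x) ->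
           (forall x, beta * T < sampled_sq r U v x -> a <= Phi x) ->
           lsum (all_lists d m) Phi <= a * delta * Dm -> Dm - good <= delta * Dm).
 { intros a Phi Ha H0 H1 H2. assert (H3 := markov (all_lists d m) (sampled_sq r U v) Phi (beta*T) a H0 H1).
   fold good in H3. rewrite Hlen in H3. apply Rmult_le_reg_l with a; auto. nra. }
 assert (Hmean : forall w, sumR d (fun i => ip r w (X i)) = 0) by (intros; apply meanzero; auto).
 destruct (Rle_dec L (9/4)) as [Hsmall | Hbig].
 - (* second moment *)
   apply (Hmk (beta * T) (fun Om => nrm2 r (Sacc X (fun _ => 0) Om))).
   + unfold beta. apply Rmult_lt_0_compat; auto. nra.
   + intros; apply nrm2_nonneg.
   + intros x Hx. rewrite sampled_eq in Hx. fold X in Hx. lra.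
   + assert (HW := walk_add d X (nrm2 r) sig).
     assert (Hstep : forall w, sumR d (fun i => nrm2 r (vadd w (X i))) <= INR d * (nrm2 r w + sig)).
     { intros w. rewrite (sumR_ext d _ (fun i => 1 * nrm2 r w + 2 * ip r w (X i) + 1 * nrm2 r (X i)))
         by (intros; rewrite nrm2_add; ring).
       rewrite sumR_lin3, sumR_const, Hmean. lra. }
     specialize (HW Hstep m (fun _ => 0)).
     assert (E0 : nrm2 r (fun _ : nat => 0) = 0).
     { unfold nrm2. rewrite (sumR_ext r _ (fun _ => 0)). rewrite sumR_const; ring. intros; ring. }
     rewrite E0, Hsig in HW. fold Dm in HW. eapply Rle_trans. exact HW.
     assert (Hb : 1 <= beta * delta).
     { rewrite Hdexp. unfold beta. assert (exp L <= (1 + 2*L)^2) by (apply exp_half; lra).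
       assert (exp L * exp (-L) = 1) by (rewrite <- exp_plus; replace (L + - L) with 0 by ring; apply exp_0).
       assert (0 < exp (-L)) by apply exp_pos. nra. }
     replace (beta * T * delta * Dm) with ((beta * delta) * (T * Dm)) by ring.
     assert (0 < T * Dm) by nra. nra.
 - (* exponential moment *)
   assert (HL94 : 9/4 < L) by lra.
   set (s := sqrt L).
   assert (Hss : s * s = L) by (apply sqrt_sqrt; lra).
   assert (Hs : 3/2 <= s).
   { unfold s. rewrite <- (sqrt_square (3/2)) by lra. apply sqrt_le_1_alt. lra. }
   set (q := sqrt T).
   assert (Hqq : q * q = T) by (apply sqrt_sqrt; lra).
   assert (Hq : 0 < q) by (apply sqrt_lt_R0; lra).
   set (lam := s / q).
   assert (Hlam : 0 < lam) by (unfold lam; apply Rdiv_lt_0_compat; lra).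
   set (Phi := fun w => exp (lam * sqrt (T + nrm2 r w))).
   set (K1 := s/(2*T) + ((s+1/4)/q)^2).
   assert (HK1 : 0 <= K1).
   { unfold K1. assert (0 <= s/(2*T)) by (apply div_nonneg; lra). assert (0 <= ((s+1/4)/q)^2) by apply pow2_ge_0. lra. }
   set (K := exp (K1 * sig)).
   apply (Hmk (exp (lam * ((1 + 2*L) * q))) (fun Om => Phi (Sacc X (fun _ => 0) Om))).
   + apply exp_pos.
   + intros; left; apply exp_pos.
   + intros x Hx. rewrite sampled_eq in Hx. fold X in Hx. unfold Phi. apply exp_le.
     apply Rmult_le_compat_l; [lra|].
     assert (0 <= (1+2*L)*q) by nra.
     rewrite <- (sqrt_square ((1+2*L)*q)) by auto. apply sqrt_le_1_alt.
     assert (((1 + 2 * L) * q * ((1 + 2 * L) * q)) = beta * T) by (unfold beta, L; rewrite <- Hqq; ring).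
     assert (0 <= nrm2 r (Sacc X (fun _ : nat => 0) x)) by apply nrm2_nonneg. lra.
   + assert (Hstep : forall w, sumR d (fun i => Phi (vadd w (X i))) <= INR d * K * Phi w).
     { intros w. set (h := sqrt (T + nrm2 r w)).
       assert (Hnw := nrm2_nonneg r w).
       assert (Hh : h * h = T + nrm2 r w) by (apply sqrt_sqrt; lra).
       assert (Hqh : q <= h) by (apply sqrt_le_1_alt; lra).
       apply Rle_trans with (sumR d (fun i => Phi w * 1 + (Phi w * (lam / h)) * ip r w (X i) + (Phi w * K1) * nrm2 r (X i))).
       - apply sumR_le. intros i Hi. unfold Phi at 1. rewrite nrm2_add.
         replace (T + (nrm2 r w + 2 * ip r w (X i) + nrm2 r (X i))) with (T + nrm2 r w + 2 * ip r w (X i) + nrm2 r (X i)) by ring.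
         eapply Rle_trans. unfold lam. apply (step_real T s q h); auto.
         + apply cauchy.
         + apply nrm2_nonneg.
         + replace (s^2) with L by (rewrite <- Hss; ring). apply HbX; auto.
         + assert (H := nrm2_nonneg r (vadd w (X i))). rewrite nrm2_add in H. lra.
         + fold K1. fold lam. fold h. replace (exp (lam * h)) with (Phi w) by reflexivity.
           right. field. lra.
       - rewrite sumR_lin3, sumR_const, Hmean.
         assert (0 < Phi w) by apply exp_pos.
         assert (1 + K1 * sig <= K) by (unfold K; apply exp_ineq1_le).
         assert (K1 * sumR d (fun i => nrm2 r (X i)) <= K1 * (INR d * sig)) by (apply Rmult_le_compat_l; auto).
         apply Rle_trans with (Phi w * (INR d + K1 * sumR d (fun i : nat => nrm2 r (X i)))); [right; ring|].
         replace (INR d * K * Phi w) with (Phi w * (INR d * K)) by ring.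
         apply Rmult_le_compat_l; [lra|]. nra. }
     assert (HK0 : 0 <= K) by (left; apply exp_pos).
     assert (HW := walk_mult d X Phi K HK0 Hstep m (fun _ => 0)).
     eapply Rle_trans. exact HW.
     assert (E0 : nrm2 r (fun _ : nat => 0) = 0).
     { unfold nrm2. rewrite (sumR_ext r _ (fun _ => 0)). rewrite sumR_const; ring. intros; ring. }
     unfold Phi. rewrite E0, Rplus_0_r. fold q.
     rewrite Rpow_mult_distr. fold Dm. unfold K. rewrite exp_pow.
     replace (INR m * (K1 * sig)) with (K1 * T) by (rewrite <- Hsig; ring).
     assert (ElamQ : lam * q = s) by (unfold lam; field; lra).
     rewrite ElamQ. rewrite Hdexp.
     replace (exp (lam * ((1 + 2 * L) * q)) * exp (- L) * Dm) with (Dm * exp ((1+2*L) * s - L))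
       by (rewrite <- ElamQ, <- exp_plus, Rmult_comm; f_equal; f_equal; ring).
     rewrite Rmult_assoc, <- exp_plus. apply Rmult_le_compat_l; [lra|]. apply exp_le.
     assert (EK : K1 * T = s/2 + (s + 1/4)^2) by (unfold K1; rewrite <- Hqq; field; lra).
     rewrite EK, <- Hss.
     assert (0 <= 2*s^3-2*s^2-s-1/16) by nra. nra.
Qed.
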